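(* Let $k\ge1$ be an integer and $\rho\in(0,1)$. Let $\beta=\frac{1-\sqrt{1-\rho}}{1+\sqrt{1-\rho}}$, $\rho_*=\frac{2\beta^k}{1+\beta^{2k}}$, $\beta_\rho=\frac{\sqrt{1+\rho}-\sqrt{1-\rho}}{\sqrt{1+\rho}+\sqrt{1-\rho}}$, $\rho_1=\frac{2\beta_\rho^k}{1+\beta_\rho^{2k}}$, $$C_*=\frac{\rho_*}{2\rho^k}\Big(\big(2+\rho-2\sqrt{1+\rho}\big)^k+\big(2+\rho+2\sqrt{1+\rho}\big)^k\Big),\qquad C_1=\frac{\rho_1}{2\rho^k}\Big(\big(1-\sqrt{1+\rho^2}\big)^k+\big(1+\sqrt{1+\rho^2}\big)^k\Big).$$ Then $\frac{2+\rho^k}{2-\rho^k}\le C_1$ whenever $k>1$, and $C_1\le C_*$ for all $k\ge1$. *)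

(* Defs.v *)
From Stdlib Require Import Reals.
Open Scope R_scope.

Definition beta (rho : R) : R := (1 - sqrt (1 - rho)) / (1 + sqrt (1 - rho)).
Definition rho_star (k : nat) (rho : R) : R :=
  2 * beta rho ^ k / (1 + beta rho ^ (2 * k)).
Definition beta_rho (rho : R) : R :=
  (sqrt (1 + rho) - sqrt (1 - rho)) / (sqrt (1 + rho) + sqrt (1 - rho)).
Definition rho_1 (k : nat) (rho : R) : R :=
  2 * beta_rho rho ^ k / (1 + beta_rho rho ^ (2 * k)).
Definition C_star (k : nat) (rho : R) : R :=
  rho_star k rho / (2 * rho ^ k) *
  ((2 + rho - 2 * sqrt (1 + rho)) ^ k + (2 + rho + 2 * sqrt (1 + rho)) ^ k).
Definition C_1 (k : nat) (rho : R) : R :=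
  rho_1 k rho / (2 * rho ^ k) *
  ((1 - sqrt (1 + rho ^ 2)) ^ k + (1 + sqrt (1 + rho ^ 2)) ^ k).

(* Main.v *)
Require Import Defs.
From Stdlib Require Import Reals Lra Lia Psatz.
Open Scope R_scope.
Lemma div_le_cross (A B C D : R) : 0 < B -> 0 < D -> A * D <= C * B -> A / B <= C / D.
Proof.
  intros HB HD H.
  replace (A / B) with (C / D + (A * D - C * B) * / (B * D)) by (field; lra).
  assert (0 < / (B * D)) by (apply Rinv_0_lt_compat; nra).
  nra.
Qed.

Lemma step (Y Z a b s : R) : 1 <= Z -> Z <= Y -> 1 <= b -> b <= a -> (s = 1 \/ s = -1) ->
  (Y + s / Y) / (Z + / Z) <= (a * Y + s / (a * Y)) / (b * Z + / (b * Z)).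
Proof.
  intros H1 H2 H3 H4 Hs.
  assert (P1 : 0 < Z + / Z) by (assert (0 < / Z) by (apply Rinv_0_lt_compat; lra); lra).
  assert (P2 : 0 < b * Z + / (b * Z)) by (assert (0 < / (b*Z)) by (apply Rinv_0_lt_compat; nra); nra).
  apply div_le_cross; [lra|lra|].
  assert (HY2 : Z*Z <= Y*Y) by nra.
  assert (Hab : 1 <= a*b) by nra.
  assert (HZ2 : 1 <= Z*Z) by nra.
  assert (E : a * ((Y*Y+s) * (b*b*Z*Z+1)) <= b * ((a*a*Y*Y+s) * (Z*Z+1))).
  { destruct Hs as [-> | ->].
    - assert (0 <= a*b*Y*Y*Z*Z*(a-b) - (a-b)).
      { assert (1 <= a*b*(Y*Y)*(Z*Z)) by (assert (1 <= Y*Y*(Z*Z)) by nra; nra). nra. }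
      assert (0 <= (a*Y*Y - b*Z*Z)*(a*b-1)).
      { apply Rmult_le_pos; [|lra]. assert (b*(Z*Z) <= a*(Y*Y)) by (apply Rmult_le_compat; nra). nra. }
      nra.
    - assert (0 <= a*b*Y*Y*Z*Z*(a-b)).
      { assert (0 <= a*b*(Y*Y)*(Z*Z)) by (repeat apply Rmult_le_pos; nra). nra. }
      assert (0 <= Y*Y*a*(a*b-1)) by (repeat apply Rmult_le_pos; nra).
      assert (0 <= Z*Z*b*(a*b-1)) by (repeat apply Rmult_le_pos; nra).
      nra. }
  replace ((Y + s / Y) * (b * Z + / (b * Z))) with (a * ((Y*Y+s) * (b*b*Z*Z+1)) / (a*b*Y*Z)) by (field; repeat split; nra).
  replace ((a * Y + s / (a * Y)) * (Z + / Z)) with (b * ((a*a*Y*Y+s) * (Z*Z+1)) / (a*b*Y*Z)) by (field; repeat split; nra).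
  unfold Rdiv. apply Rmult_le_compat_r; [|exact E].
  left; apply Rinv_0_lt_compat. assert (0 < a*b) by nra. assert (0 < Y*Z) by nra. nra.
Qed.

Lemma key (Y Z W G : R) : 1 <= Z -> Z <= Y -> Z <= W -> Y * W <= G * Z ->
  (Y + / Y) / (Z + / Z) <= (G + / G) / (W + / W).
Proof.
  intros H1 H2 H3 H4.
  assert (HW : 1 <= W) by lra.
  assert (HG : Y * W / Z <= G).
  { apply (Rmult_le_reg_r Z); [lra|]. field_simplify; [lra|lra]. }
  set (V := Y * W / Z).
  assert (HV : W <= V).
  { unfold V. apply (Rmult_le_reg_r Z); [lra|]. field_simplify; [nra|lra]. }
  apply Rle_trans with ((V + / V) / (W + / W)).
  - apply div_le_cross.
    + assert (0 < / Z) by (apply Rinv_0_lt_compat; lra). lra.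
    + assert (0 < / W) by (apply Rinv_0_lt_compat; lra). lra.
    + unfold V.
      replace ((Y + / Y) * (W + / W)) with ((Y*Y+1)*(W*W+1) / (Y * W)) by (field; lra).
      replace ((Y * W / Z + / (Y * W / Z)) * (Z + / Z)) with ((Y*Y*W*W + Z*Z)*(Z*Z+1) / (Y * W * Z * Z)) by (field; nra).
      assert (0 < Y*W) by nra. assert (0 < Z*Z) by nra.
      apply div_le_cross; [lra| apply Rmult_lt_0_compat; [nra|lra] |].
      assert (0 <= (Y*Y - Z*Z)*(W*W-Z*Z)) by (apply Rmult_le_pos; nra).
      assert (E: (Y*Y+1)*(W*W+1)*Z*Z <= (Y*Y*W*W + Z*Z)*(Z*Z+1)) by nra.
      replace ((Y * Y + 1) * (W * W + 1) * (Y * W * Z * Z)) with (((Y*Y+1)*(W*W+1)*Z*Z) * (Y*W)) by ring.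
      apply Rmult_le_compat_r; lra.
  - unfold Rdiv. apply Rmult_le_compat_r.
    + left; apply Rinv_0_lt_compat. assert (0 < / W) by (apply Rinv_0_lt_compat; lra). lra.
    + assert (G + / G - (V + / V) = (G - V) * (G * V - 1) / (G * V)) by (field; nra).
      assert (0 <= (G - V) * (G * V - 1) / (G * V)).
      { assert (1 <= V) by lra. assert (V <= G) by exact HG. assert (1 <= G * V) by nra. unfold Rdiv. apply Rmult_le_pos; [apply Rmult_le_pos; lra|]. left; apply Rinv_0_lt_compat; lra. }
      lra.
Qed.

Definition Ef (y z : R) (k : nat) := (y ^ k + (-1) ^ k / y ^ k) / (z ^ k + / z ^ k).

Lemma sign_pow (k : nat) : (-1) ^ k = 1 \/ (-1) ^ k = -1.
Proof. induction k as [|k IH]; simpl; [left; ring|]. destruct IH as [-> | ->]; [right|left]; ring. Qed.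

Lemma Ef_step (y z : R) (n : nat) : 1 <= z -> z <= y -> Ef y z n <= Ef y z (S (S n)).
Proof.
  intros H1 H2. unfold Ef.
  replace (y ^ S (S n)) with ((y*y) * y^n) by (simpl; ring).
  replace (z ^ S (S n)) with ((z*z) * z^n) by (simpl; ring).
  replace ((-1) ^ S (S n)) with ((-1)^n) by (simpl; ring).
  apply step.
  - apply pow_R1_Rle; lra.
  - apply pow_incr; lra.
  - nra.
  - nra.
  - apply sign_pow.
Qed.

Lemma Ef_ge2 (y z m : R) : 0 < y -> 1 <= z -> 2 < m -> y - / y = m -> z + / z = m ->
  forall n, Ef y z 2 <= Ef y z (S (S n)).
Proof.
  intros Hy0 H1 Hm Hy Hz.
  assert (Hzy : z <= y).
  { assert (0 < / y) by (apply Rinv_0_lt_compat; lra).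
    assert (0 < / z) by (apply Rinv_0_lt_compat; lra). lra. }
  assert (E3 : Ef y z 2 <= Ef y z 3).
  { unfold Ef.
    assert (A2 : y ^ 2 + (-1) ^ 2 / y ^ 2 = m*m + 2) by (rewrite <- Hy; field; lra).
    assert (A3 : y ^ 3 + (-1) ^ 3 / y ^ 3 = m*(m*m + 3)) by (rewrite <- Hy; field; lra).
    assert (B2 : z ^ 2 + / z ^ 2 = m*m - 2) by (rewrite <- Hz; field; lra).
    assert (B3 : z ^ 3 + / z ^ 3 = m*(m*m - 3)) by (rewrite <- Hz; field; lra).
    rewrite A2, A3, B2, B3.
    apply div_le_cross; nra. }
  assert (forall n, Ef y z 2 <= Ef y z (S (S n)) /\ Ef y z 2 <= Ef y z (S (S (S n)))).
  { induction n as [|n [IH1 IH2]].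
    - split; [lra | exact E3].
    - split; [exact IH2|]. eapply Rle_trans; [exact IH1|]. apply Ef_step; lra. }
  intro n; apply H.
Qed.


Ltac tt := first [lra | nra | (intro; nra)].

Theorem lemma7 (k : nat) (rho : R) (hk : (1 <= k)%nat) (hrho : 0 < rho < 1) :
  ((1 < k)%nat -> (2 + rho ^ k) / (2 - rho ^ k) <= C_1 k rho) /\
  C_1 k rho <= C_star k rho.
Proof.
  destruct hrho as [hr0 hr1].
  unfold C_1, C_star, rho_1, rho_star, beta_rho, beta.
  set (a := sqrt (1 - rho)). set (b := sqrt (1 + rho)). set (s := sqrt (1 + rho ^ 2)).
  assert (Ha : a * a = 1 - rho) by (apply sqrt_sqrt; lra).
  assert (Hb : b * b = 1 + rho) by (apply sqrt_sqrt; lra).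
  assert (Hs : s * s = 1 + rho ^ 2) by (apply sqrt_sqrt; nra).
  assert (Ha0 : 0 <= a) by apply sqrt_pos.
  assert (Hb0 : 0 <= b) by apply sqrt_pos.
  assert (Hs0 : 0 <= s) by apply sqrt_pos.
  clearbody a b s.
  assert (Ha1 : a < 1) by nra.
  assert (Hb1 : 1 < b) by nra.
  assert (Hs1 : 1 <= s) by nra.
  assert (Hab : a < b) by lra.
  set (y := (1 + s) / rho). set (z := (b + a) / (b - a)).
  set (w := (1 + a) / (1 - a)). set (g := (b + 1) / (b - 1)).
  assert (I1 : (b - a) / (b + a) = / z) by (unfold z; field; lra).
  assert (I2 : (1 - a) / (1 + a) = / w) by (unfold w; field; lra).
  assert (I3 : 2 + rho - 2 * b = rho * / g).
  { unfold g. field_simplify_eq; tt. }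
  assert (I4 : 2 + rho + 2 * b = rho * g).
  { unfold g. field_simplify_eq; tt. }
  assert (I5 : 1 - s = -1 * rho * / y).
  { unfold y. field_simplify_eq; tt. }
  assert (I6 : 1 + s = rho * y) by (unfold y; field; lra).
  assert (F1 : y - / y = 2 / rho).
  { unfold y. field_simplify_eq; tt. }
  assert (F2 : z + / z = 2 / rho).
  { unfold z. field_simplify_eq; tt. }
  assert (Hz1 : 1 <= z).
  { unfold z. apply (Rmult_le_reg_r (b - a)); [lra|]. field_simplify; lra. }
  assert (Hy0 : 0 < y) by (unfold y; apply Rdiv_lt_0_compat; lra).
  assert (Hzw : z <= w).
  { unfold z, w. apply div_le_cross; [lra|lra|]. nra. }
  assert (Hyw : y * w <= g * z).
  { assert (Hs2 : s <= 1 + rho^2/2) by nra.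
    assert (Q1 : (1+a)*(1+a) = 2 - rho + 2*a) by nra.
    assert (Q2 : (b+a)*(b+a) = 2 + 2*a*b) by nra.
    assert (Q3 : a <= a*b) by nra.
    assert (Q4 : (4 + rho^2) * ((1+a)*(1+a)) <= 4 * ((b+a)*(b+a))).
    { rewrite Q1, Q2. assert (0 <= rho^2 * a) by (apply Rmult_le_pos; nra). nra. }
    assert (Q5 : 4 <= (b+1)*(b+1)) by nra.
    assert (P : 2*(1+s)*((1+a)*(1+a)) <= ((b+1)*(b+1))*((b+a)*(b+a))).
    { assert (0 <= (1+a)*(1+a)) by nra. assert (0 <= (b+a)*(b+a)) by nra.
      assert (2*(1+s)*((1+a)*(1+a)) <= (4 + rho^2) * ((1+a)*(1+a))) by nra.
      assert (4 * ((b+a)*(b+a)) <= ((b+1)*(b+1))*((b+a)*(b+a))) by nra.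
      lra. }
    unfold y, w, g, z.
    replace ((1 + s) / rho * ((1 + a) / (1 - a))) with (((1+s)*(1+a))/(rho*(1-a))) by (field; lra).
    replace ((b + 1) / (b - 1) * ((b + a) / (b - a))) with (((b+1)*(b+a))/((b-1)*(b-a))) by (field; lra).
    apply div_le_cross; [nra|nra|].
    set (K := (1+a)*(b+1)*(b+a)).
    assert (HK : 0 < K) by (unfold K; repeat apply Rmult_lt_0_compat; lra).
    apply (Rmult_le_reg_r K); [exact HK|]. unfold K.
    replace ((1 + s) * (1 + a) * ((b - 1) * (b - a)) * ((1 + a) * (b + 1) * (b + a)))
      with ((1+s)*((1+a)*(1+a))*((b-1)*(b+1))*((b-a)*(b+a))) by ring.
    replace ((b + 1) * (b + a) * (rho * (1 - a)) * ((1 + a) * (b + 1) * (b + a)))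
      with (((b+1)*(b+1))*((b+a)*(b+a))*rho*((1-a)*(1+a))) by ring.
    replace ((b-1)*(b+1)) with rho by nra.
    replace ((b-a)*(b+a)) with (2*rho) by nra.
    replace ((1-a)*(1+a)) with rho by nra.
    assert (0 < rho * rho) by nra.
    nra. }
  assert (Hw0 : 0 < w) by lra.
  assert (Hg0 : 0 < g) by (unfold g; apply Rdiv_lt_0_compat; lra).
  rewrite I1, I2, I3, I4, I5, I6.
  replace (2 * k)%nat with (k + k)%nat by lia.
  rewrite !Rpow_mult_distr, !pow_add, !pow_inv.
  assert (Yp : 0 < y ^ k) by (apply pow_lt; lra).
  assert (Zp : 1 <= z ^ k) by (apply pow_R1_Rle; lra).
  assert (Rp : 0 < rho ^ k) by (apply pow_lt; lra).
  assert (EC1 : 2 * / z ^ k / (1 + / z ^ k * / z ^ k) / (2 * rho ^ k) *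
     ((-1) ^ k * rho ^ k * / y ^ k + rho ^ k * y ^ k) = Ef y z k).
  { unfold Ef. field. repeat split; try lra. nra. }
  assert (Wp : 0 < w ^ k) by (apply pow_lt; lra).
  assert (Gp : 0 < g ^ k) by (apply pow_lt; lra).
  assert (ECs : 2 * / w ^ k / (1 + / w ^ k * / w ^ k) / (2 * rho ^ k) *
     (rho ^ k * / g ^ k + rho ^ k * g ^ k) = (g ^ k + / g ^ k) / (w ^ k + / w ^ k)).
  { field. repeat split; try lra. nra. }
  rewrite EC1, ECs.
  assert (Hzy : z <= y).
  { assert (0 < / y) by (apply Rinv_0_lt_compat; lra).
    assert (0 < / z) by (apply Rinv_0_lt_compat; lra). lra. }
  split.
  - intro Hk.
    destruct k as [|[|n]]; [lia|lia|].
    assert (Hm : 2 < 2 / rho).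
    { apply (Rmult_lt_reg_r rho); [lra|]. field_simplify; lra. }
    eapply Rle_trans; [|apply (Ef_ge2 y z (2/rho)); assumption].
    assert (E2 : Ef y z 2 = (2 + rho^2) / (2 - rho^2)).
    { unfold Ef.
      assert (A2 : y ^ 2 + (-1) ^ 2 / y ^ 2 = (2/rho)*(2/rho) + 2) by (rewrite <- F1; field; lra).
      assert (B2 : z ^ 2 + / z ^ 2 = (2/rho)*(2/rho) - 2) by (rewrite <- F2; field; lra).
      rewrite A2, B2. field. repeat split; intro; nra. }
    rewrite E2.
    assert (Hp : rho ^ S (S n) <= rho ^ 2).
    { replace (rho ^ S (S n)) with (rho^2 * rho^n) by (simpl; ring).
      assert (rho ^ n <= 1) by (rewrite <- (pow1 n); apply pow_incr; lra).
      nra. }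
    assert (0 < rho ^ S (S n)) by (apply pow_lt; lra).
    assert (rho ^ 2 < 1) by nra.
    apply div_le_cross; [lra|lra|]. nra.
  - unfold Ef at 1.
    apply Rle_trans with ((y^k + / y^k)/(z^k + / z^k)).
    + unfold Rdiv. apply Rmult_le_compat_r.
      * left; apply Rinv_0_lt_compat. assert (0 < / z ^ k) by (apply Rinv_0_lt_compat; lra). lra.
      * assert (0 < / y ^ k) by (apply Rinv_0_lt_compat; lra).
        destruct (sign_pow k) as [-> | ->]; lra.
    + apply key.
      * exact Zp.
      * apply pow_incr; lra.
      * apply pow_incr; lra.
      * rewrite <- !Rpow_mult_distr. apply pow_incr. split; [nra|lra].
Qed.
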